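(* For every integer $n\ge 1$, $$\chi_i(Q_n)=\begin{cases} n+1 & \text{if } n=2^m-1 \text{ for some integer } m\ge 0,\\ n+2 & \text{otherwise.}\end{cases}$$
   Context: $Q_n$ is the $n$-dimensional hypercube: vertex set $\{0,1\}^n$, two vertices adjacent iff they differ in exactly one coordinate. An incidence of a graph $G$ is a pair $(v,e)$ with $v\in V(G)$, $e\in E(G)$ and $v\in e$. Two incidences $(v,e)$ and $(u,f)$ are adjacent if $v=u$, or $e=f$, or $vu\in\{e,f\}$. An incidence coloring assigns colors to all incidences so that adjacent incidences receive distinct colors. $\chi_i(G)$ is the least number of colors in an incidence coloring of $G$. *)

(* Defs.v *)
From mathcomp Require Import all_boot.
Set Implicit Arguments. Unset Strict Implicit. Unset Printing Implicit Defensive.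

(* A simple graph on a finite vertex type V given by a symmetric irreflexive
   adjacency relation adj. Edges are 2-element vertex sets {x,y} with adj x y. *)
Section IncidenceColoring.
Variables (V : finType) (adj : rel V).

Definition edges : {set {set V}} :=
  [set e : {set V} | [exists x, exists y, adj x y && (e == [set x; y])]].

Definition incidence (p : V * {set V}) : bool := (p.2 \in edges) && (p.1 \in p.2).

Definition inc_adjacent (p q : V * {set V}) : bool :=
  [|| p.1 == q.1, p.2 == q.2, [set p.1; q.1] == p.2 | [set p.1; q.1] == q.2].

Definition incidence_coloring (k : nat) (c : V * {set V} -> 'I_k) : Prop :=
  forall p q, incidence p -> incidence q -> p != q -> inc_adjacent p q -> c p != c q.

Definition incidence_colorable (k : nat) : Prop :=
  exists c : V * {set V} -> 'I_k, incidence_coloring c.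

Definition is_incidence_chromatic_number (k : nat) : Prop :=
  incidence_colorable k /\ forall k', incidence_colorable k' -> k <= k'.

End IncidenceColoring.

Definition hypercube_vertex (n : nat) := {ffun 'I_n -> bool}.
Definition hypercube_adj (n : nat) : rel (hypercube_vertex n) :=
  fun u v => #|[set i | u i != v i]| == 1.

(* Main.v *)
Require Import Defs.
From Stdlib Require Import PeanoNat.

Lemma lxor_lt_pow2_std p a b : a < 2 ^ p -> b < 2 ^ p -> Nat.lxor a b < 2 ^ p.
Proof.
intros ha hb.
assert (hp : 2 ^ p <> 0) by (apply Nat.pow_nonzero; discriminate).
assert (E : Nat.lxor a b = Nat.lxor a b mod 2 ^ p).
{ apply Nat.bits_inj; intro m.
  destruct (Nat.lt_ge_cases m p) as [h|h].
  - now rewrite Nat.mod_pow2_bits_low.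
  - rewrite Nat.mod_pow2_bits_high by exact h.
    rewrite Nat.lxor_spec.
    rewrite <- (Nat.mod_small a (2^p) ha), <- (Nat.mod_small b (2^p) hb).
    rewrite !Nat.mod_pow2_bits_high by exact h. reflexivity. }
rewrite E. apply Nat.mod_upper_bound. exact hp.
Qed.

From HB Require Import structures.
From mathcomp Require Import all_boot zify.

Lemma expn_pow m n : expn m n = Nat.pow m n.
Proof. elim: n => [|n IH] //; by rewrite expnS IH. Qed.

Lemma lxor_lt p a b : a < 2 ^ p -> b < 2 ^ p -> Nat.lxor a b < 2 ^ p.
Proof. rewrite expn_pow => /ltP ha /ltP hb; apply/ltP; exact: lxor_lt_pow2_std. Qed.
Set Implicit Arguments. Unset Strict Implicit. Unset Printing Implicit Defensive.
Lemma lxorA : associative Nat.lxor. Proof. move=> a b c; by rewrite Nat.lxor_assoc. Qed.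
Lemma lxorC : commutative Nat.lxor. Proof. move=> a b; exact: Nat.lxor_comm. Qed.
Lemma lxor0n : left_id 0 Nat.lxor. Proof. move=> a; exact: Nat.lxor_0_l. Qed.
Lemma lxorn0 : right_id 0 Nat.lxor. Proof. move=> a; exact: Nat.lxor_0_r. Qed.
Lemma lxornn a : Nat.lxor a a = 0. Proof. exact: Nat.lxor_nilpotent. Qed.
HB.instance Definition _ := Monoid.isComLaw.Build nat 0 Nat.lxor lxorA lxorC lxor0n.

Lemma lxorI a b c : Nat.lxor a b = Nat.lxor a c -> b = c.
Proof. move=> h. have := congr1 (Nat.lxor a) h. by rewrite !lxorA lxornn !lxor0n. Qed.
Lemma lxor_eq0 a b : Nat.lxor a b = a -> b = 0.
Proof. move=> h; apply: (@lxorI a); by rewrite h lxorn0. Qed.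
Lemma lxor_neq a b c : b != c -> Nat.lxor a b != Nat.lxor a c.
Proof. by apply: contra => /eqP /lxorI ->. Qed.
Lemma lxor_neq0 a b : b != 0 -> Nat.lxor a b != a.
Proof. by apply: contra => /eqP /lxor_eq0 ->. Qed.

Notation xr := PeanoNat.Nat.lxor.


Section Gen.
Variables (V : finType) (adj : rel V).
Hypothesis adj_sym : forall x y, adj x y = adj y x.
Hypothesis adj_irr : forall x, adj x x = false.

Lemma adj_neq x y : adj x y -> x != y.
Proof. by apply: contraTneq => ->; rewrite adj_irr. Qed.

Lemma edge_in x y : adj x y -> [set x; y] \in edges adj.
Proof. by move=> h; rewrite inE; apply/existsP; exists x; apply/existsP; exists y; rewrite h eqxx. Qed.

Lemma incidence_ex p : incidence adj p -> exists w, adj p.1 w /\ p.2 = [set p.1; w].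
Proof.
case/andP; rewrite inE => /existsP [x /existsP [y /andP [hxy /eqP he]]].
rewrite he !inE => /orP [/eqP ->|/eqP ->]; first by exists y.
by exists x; rewrite adj_sym setUC.
Qed.

Lemma incidence_mk x y : adj x y -> incidence adj (x, [set x; y]).
Proof. by move=> h; rewrite /incidence /= edge_in // !inE eqxx. Qed.

Lemma set2_inj (x y z : V) : x != y -> [set x; y] = [set x; z] -> y = z.
Proof.
move=> hxy he; have : y \in [set x; z] by rewrite -he !inE eqxx orbT.
by rewrite !inE eq_sym (negbTE hxy) => /eqP.
Qed.

Lemma set2_eq (a b c d : V) : a != c -> [set a; b] = [set c; d] -> c = b /\ a = d.
Proof.
move=> hac he; split.
  have : c \in [set a; b] by rewrite he !inE eqxx.
  by rewrite !inE eq_sym (negbTE hac) => /eqP.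
have : a \in [set c; d] by rewrite -he !inE eqxx.
by rewrite !inE (negbTE hac) => /eqP.
Qed.

Variable k : nat.
Variable f : V -> V -> 'I_k.+1.

Definition col (p : V * {set V}) : 'I_k.+1 :=
  if [pick w | adj p.1 w && (p.2 == [set p.1; w])] is Some w then f p.1 w else ord0.

Lemma col_val p w : adj p.1 w -> p.2 = [set p.1; w] -> col p = f p.1 w.
Proof.
move=> h1 h2; rewrite /col; case: pickP => [w' /andP [h1' /eqP h2']|/(_ w)].
  by congr f; apply: (set2_inj (adj_neq h1')); rewrite -h2' h2.
by rewrite h1 h2 eqxx.
Qed.

Hypothesis H1 : forall u v w, adj u v -> adj u w -> v != w -> f u v != f u w.
Hypothesis H2 : forall u v w, adj u v -> adj v w -> f u v != f v w.

Lemma colorable_of_f : incidence_colorable adj k.+1.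
Proof.
exists col => p q hp hq hpq.
case: (incidence_ex hp) => b [hab eb]; case: (incidence_ex hq) => d [hcd ed].
rewrite (col_val hab eb) (col_val hcd ed).
move: hpq; case: p hab eb {hp} => a e /= hab ->; case: q hcd ed {hq} => c e' /= hcd -> hpq.
rewrite /inc_adjacent /=.
have [hac0|hac] := eqVneq a c.
  subst c; move=> _; apply: (H1 hab hcd); apply/eqP => hbd; move: hpq; by rewrite hbd eqxx.
case/or4P => [/eqP he|/eqP he|/eqP he|/eqP he]; first by [].   
- case: (set2_eq hac he) => ? ?; subst; exact: H2.
- have ? := set2_inj hac he; subst; exact: H2.
- rewrite setUC in he; have hca : c != a by rewrite eq_sym.
  have ? := set2_inj hca he; subst.
  by rewrite eq_sym; exact: H2.
Qed.
End Gen.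


Section Cube.
Variable n : nat.
Notation V := (hypercube_vertex n).

Definition flip (u : V) (i : 'I_n) : V := [ffun j => if j == i then ~~ u j else u j].

Lemma flip_diff (u : V) i : [set j | u j != flip u i j] = [set i].
apply/setP => j; rewrite !inE ffunE; have [->|hji] := eqVneq j i; first by case: (u i).
by rewrite eqxx.


Qed.

Lemma adj_flip (u : V) i : hypercube_adj u (flip u i).
Proof. by rewrite /hypercube_adj flip_diff cards1. Qed.

Lemma flipK (u : V) i : flip (flip u i) i = u.
Proof. apply/ffunP => j; rewrite !ffunE; case: eqP => [->|] //=; by rewrite negbK. Qed.

Lemma flip_at (u : V) i : flip u i i = ~~ u i.
Proof. by rewrite ffunE eqxx. Qed.

Lemma flip_inj (u : V) : injective (flip u).
Proof.
move=> i j h; apply/eqP; apply/negPn/negP => hij.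
have := congr1 (fun w : V => w i) h; rewrite /= flip_at ffunE (negbTE hij).
by case: (u i).
Qed.

Lemma flip_neq (u : V) i : flip u i != u.
Proof. apply/eqP => /(congr1 (fun w : V => w i)); rewrite flip_at; by case: (u i). Qed.

Lemma adjP (u v : V) : hypercube_adj u v -> exists i, v = flip u i.
Proof.
rewrite /hypercube_adj => /cards1P [i hi]; exists i.
apply/ffunP => j; rewrite ffunE; case: eqP => [->|/eqP hj].
  have : i \in [set j | u j != v j] by rewrite hi inE.
  by rewrite inE; case: (u i); case: (v i).
have : j \notin [set j | u j != v j] by rewrite hi inE.
by rewrite inE negbK => /eqP.
Qed.

Lemma cube_sym : forall x y : V, hypercube_adj x y = hypercube_adj y x.
Proof.
move=> x y; rewrite /hypercube_adj; congr (_ == _); apply: eq_card => j; by rewrite !inE eq_sym.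
Qed.

Lemma cube_irr : forall x : V, hypercube_adj x x = false.
Proof. by move=> x; rewrite /hypercube_adj (_ : [set i | x i != x i] = set0) ?cards0 //; apply/setP => j; rewrite !inE eqxx. Qed.

Lemma pick_flip (u : V) i : [pick j | u j != flip u i j] = Some i.
Proof.
case: pickP => [j hj|/(_ i)]; last by rewrite flip_at; case: (u i).
have : j \in [set j | u j != flip u i j] by rewrite inE.
by rewrite flip_diff inE => /eqP ->.
Qed.

Variable K : nat.
Variable g : V -> 'I_n -> nat.
Hypothesis gK : forall v i, g v i <= K.
Hypothesis G1 : forall u i j, i != j -> g (flip u i) i != g (flip u j) j.
Hypothesis G2 : forall v i j, g v i != g (flip v j) j.

Definition fcol (u v : V) : 'I_K.+1 :=
  inord (if [pick j | u j != v j] is Some i then g v i else 0).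

Lemma fcol_flip u i : fcol u (flip u i) = inord (g (flip u i) i).
Proof. by rewrite /fcol pick_flip. Qed.

Lemma inord_neq a b : a <= K -> b <= K -> a != b -> (inord a : 'I_K.+1) != inord b.
Proof. move=> ha hb hab; apply: contra hab => /eqP h; have := congr1 val h; by rewrite /= !inordK // => ->. Qed.

Lemma cube_colorable : incidence_colorable (@hypercube_adj n) K.+1.
Proof.
apply: (@colorable_of_f _ _ cube_sym cube_irr K fcol).
- move=> u v w /adjP [i ->] /adjP [j ->] hvw; rewrite !fcol_flip; apply: inord_neq => //.
  apply: G1; apply: contra hvw => /eqP ->; by [].
- move=> u v w /adjP [i ->] /adjP [j ->]; rewrite !fcol_flip; exact: inord_neq (gK _ _) (gK _ _) (G2 _ _ _).
Qed.
End Cube.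


Section Sig.
Variable n : nat.
Notation V := (hypercube_vertex n).
Variables (P : pred 'I_n) (L : 'I_n -> nat).
Definition sig (v : V) := \big[xr/0]_(i | P i && v i) L i.

Lemma sig_flip v j : sig (flip v j) = if P j then xr (sig v) (L j) else sig v.
Proof.
rewrite /sig !big_mkcondr /=.
case: ifP => hP.
  rewrite (bigD1 j) //= [in RHS](bigD1 j) //= flip_at.
  rewrite (eq_bigr (fun i => if v i then L i else 0)); last first.
    by move=> i /andP [_ hij]; rewrite ffunE (negbTE hij).
  case: (v j) => /=; rewrite !lxor0n; last by rewrite lxorC.
  by rewrite [in RHS]lxorC lxorA lxornn lxor0n.
apply: eq_bigr => i hi; rewrite ffunE; case: eqP => // eij; by rewrite eij hP in hi.
Qed.

Lemma sig_lt p v : (forall i, P i -> L i < 2 ^ p) -> sig v < 2 ^ p.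
Proof.
move=> hL; rewrite /sig; apply: (big_ind (fun x => x < 2 ^ p)).
- by rewrite expn_gt0.
- exact: lxor_lt.
- by move=> i /andP [hi _]; apply: hL.
Qed.
End Sig.


Lemma hamming_colorable n m : n.+1 = 2 ^ m -> incidence_colorable (@hypercube_adj n) n.+1.
Proof.
move=> hm.
pose g := fun (v : hypercube_vertex n) (i : 'I_n) => sig predT (fun i : 'I_n => i.+1) v.
apply: (@cube_colorable n n g).
- move=> v i; rewrite -ltnS hm; apply: sig_lt => k _; rewrite -hm ltnS; exact: ltn_ord.
- move=> u i j hij; rewrite /g !sig_flip /=; apply: lxor_neq; by rewrite eqSS.
- move=> v i j; rewrite /g sig_flip /= eq_sym; exact: lxor_neq0.
Qed.

Section General.
Variables (n p : nat).
Let a := (2 ^ p).-1.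
Hypothesis ha : a <= n.
Hypothesis hb : n <= a + a.
Let b := n - a.
Lemma a1 : a.+1 = 2 ^ p. Proof. by rewrite /a prednK // expn_gt0. Qed.

Definition sx (v : hypercube_vertex n) := sig (fun i : 'I_n => i < a) (fun i : 'I_n => i.+1) v.
Definition sy (v : hypercube_vertex n) := sig (fun i : 'I_n => a <= i) (fun i : 'I_n => i.+1 - a) v.

Lemma sx_lt v : sx v < a.+1.
Proof. rewrite a1; apply: sig_lt => i hi; by rewrite -a1 ltnS. Qed.
Lemma sy_lt v : sy v < a.+1.
Proof. rewrite a1; apply: sig_lt => i hi; rewrite -a1; have := ltn_ord i; lia. Qed.

Definition gg (v : hypercube_vertex n) (i : 'I_n) : nat :=
  if a <= i then sy v else if sx v <= b then a.+1 + sx v else xr (sy v) (sx v).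

Lemma xlt x y : x < a.+1 -> y < a.+1 -> xr x y < a.+1.
Proof. rewrite a1; exact: lxor_lt. Qed.

Lemma gg_le v i : gg v i <= n.+1.
Proof.
rewrite /gg; have := sx_lt v; have := sy_lt v; case: ifP => _; first lia.
case: ifP => h1; first lia.
move=> h2 h3; have := xlt h2 h3; lia.
Qed.

Lemma sx_flip v j : sx (flip v j) = if j < a then xr (sx v) j.+1 else sx v.
Proof. exact: sig_flip. Qed.
Lemma sy_flip v j : sy (flip v j) = if a <= j then xr (sy v) (j.+1 - a) else sy v.
Proof. exact: sig_flip. Qed.

Lemma gen_colorable : incidence_colorable (@hypercube_adj n) n.+2.
Proof.
apply: (@cube_colorable n n.+1 gg); first exact: gg_le.
- move=> u i j hij; rewrite /gg !sx_flip !sy_flip.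
  have hsx := sx_lt u; have hsy := sy_lt u.
  have hi := ltn_ord i; have hj := ltn_ord j.
  have ij : (i : nat) != j by [].
  case: (leqP a i) => hai; case: (leqP a j) => haj /=.
  + by apply: lxor_neq; lia.
  + have h1 : xr (sy u) (i.+1 - a) < a.+1 by apply: xlt => //; lia.
    case: ifP => hz; first lia.
    by apply: lxor_neq; lia.
  + have h1 : xr (sy u) (j.+1 - a) < a.+1 by apply: xlt => //; lia.
    case: ifP => hz; first lia.
    by apply: lxor_neq; lia.
  + have hz : xr (sx u) i.+1 != xr (sx u) j.+1 by apply: lxor_neq.
    have hzi : xr (sx u) i.+1 < a.+1 by apply: xlt => //; lia.
    have hzj : xr (sx u) j.+1 < a.+1 by apply: xlt => //; lia.
    have h1 := xlt hsy hzi; have h2 := xlt hsy hzj.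
    case: ifP => hz1; case: ifP => hz2; try lia.
    exact: lxor_neq.
- move=> v i j; rewrite /gg !sx_flip !sy_flip.
  have hsx := sx_lt v; have hsy := sy_lt v.
  have hi := ltn_ord i; have hj := ltn_ord j.
  case: (leqP a i) => hai; case: (leqP a j) => haj /=.
  + by rewrite eq_sym; apply: lxor_neq0; lia.
  + have hzj : xr (sx v) j.+1 < a.+1 by apply: xlt => //; lia.
    case: ifP => hz; first lia.
    by rewrite eq_sym; apply: lxor_neq0; lia.
  + have h1 : xr (sy v) (j.+1 - a) < a.+1 by apply: xlt => //; lia.
    have h2 := xlt hsy hsx.
    case: ifP => hz; first lia.
    by apply: lxor_neq; lia.
  + have hzj : xr (sx v) j.+1 < a.+1 by apply: xlt => //; lia.
    have hne : xr (sx v) j.+1 != sx v by apply: lxor_neq0.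
    have h1 := xlt hsy hsx; have h2 := xlt hsy hzj.
    case: ifP => hz1; case: ifP => hz2; try lia.
    by apply: lxor_neq; rewrite eq_sym.
Qed.
End General.


Section Lower.
Variable n : nat.
Notation V := (hypercube_vertex n).
Notation adj := (@hypercube_adj n).

Lemma adj_flip' (u : V) i : adj (flip u i) u.
Proof. by rewrite cube_sym adj_flip. Qed.

Lemma inc_out (v : V) i : incidence adj (v, [set v; flip v i]).
Proof. apply: incidence_mk; exact: adj_flip. Qed.
Lemma inc_in (v : V) i : incidence adj (flip v i, [set flip v i; v]).
Proof. apply: incidence_mk; exact: adj_flip'. Qed.

Variable k : nat.
Variable c : V * {set V} -> 'I_k.
Hypothesis hc : incidence_coloring adj c.

Lemma out_neq (v : V) i j : i != j -> c (v, [set v; flip v i]) != c (v, [set v; flip v j]).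
Proof.
move=> hij; apply: hc; rewrite ?inc_out //; last by rewrite /inc_adjacent eqxx.
apply: contra hij => /eqP [] he.
have hv : v != flip v i by rewrite eq_sym flip_neq.
by have /flip_inj -> := set2_inj hv he.
Qed.

Lemma in_out_neq (v : V) i j : c (flip v i, [set flip v i; v]) != c (v, [set v; flip v j]).
Proof.
apply: hc; rewrite ?inc_out ?inc_in //.
  by apply/eqP => -[] /eqP; rewrite (negbTE (flip_neq v i)).
by rewrite /inc_adjacent /= eqxx !orbT.
Qed.

Lemma lowerA : 0 < n -> n.+1 <= k.
Proof.
move=> hn; pose v0 : V := [ffun _ => false]; pose i0 : 'I_n := Ordinal hn.
pose F (o : option 'I_n) : 'I_k :=
  if o is Some i then c (v0, [set v0; flip v0 i]) else c (flip v0 i0, [set flip v0 i0; v0]).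
have Finj : injective F.
  case=> [i|] [j|] //= h.
  - congr Some; apply/eqP; apply/negPn/negP => hij; move: (out_neq v0 hij); by rewrite h eqxx.
  - by move: (in_out_neq v0 i0 i); rewrite h eqxx.
  - by move: (in_out_neq v0 i0 j); rewrite h eqxx.
by have := leq_card F Finj; rewrite card_option !card_ord.
Qed.
End Lower.


Section LowerB.
Variable n : nat.
Notation V := (hypercube_vertex n).
Notation adj := (@hypercube_adj n).
Variable c : V * {set V} -> 'I_n.+1.
Hypothesis hc : incidence_coloring adj c.

Definition Out (v : V) := [set c (v, [set v; flip v i]) | i : 'I_n].

Lemma card_Out v : #|Out v| = n.
Proof.
rewrite card_imset ?card_ord // => i j h; apply/eqP; apply/negPn/negP => hij.
by move: (out_neq hc v hij); rewrite h eqxx.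
Qed.

Lemma in_notin v i : c (flip v i, [set flip v i; v]) \notin Out v.
Proof. by apply/imsetP => -[j _ h]; move: (in_out_neq hc v i j); rewrite h eqxx. Qed.

Definition mm (v : V) : 'I_n.+1 := odflt ord0 [pick x in ~: Out v].

Lemma notin_m v x : x \notin Out v -> x = mm v.
Proof.
have : #|~: Out v| = 1.
  by have := cardsCs (~: Out v); rewrite setCK card_Out card_ord; lia.
move/eqP/cards1P => -[y hy] hx; rewrite /mm.
have -> : x = y by apply/set1P; rewrite -hy inE.
case: pickP => [z|/(_ y)]; last by rewrite hy set11.
by rewrite hy => /set1P ->.
Qed.

Lemma m_notin v : mm v \notin Out v.
Proof.
have : #|~: Out v| = 1.
  by have := cardsCs (~: Out v); rewrite setCK card_Out card_ord; lia.
move/eqP/cards1P => -[y hy]; rewrite /mm; case: pickP => [z|/(_ y)]; last by rewrite hy set11.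
by rewrite -in_setC.
Qed.

Lemma m_flip u i : mm (flip u i) = c (u, [set u; flip u i]).
Proof. by have := in_notin (flip u i) i; rewrite flipK => /notin_m ->. Qed.

Definition N (u : V) := u |: [set flip u i | i : 'I_n].

Lemma inN u w : (w \in N u) = (w == u) || adj u w.
Proof.
rewrite /N !inE; congr (_ || _); apply/imsetP/idP => [[i _ ->]|/adjP [i ->]].
  exact: adj_flip.
by exists i.
Qed.

Lemma N_sym u w : (w \in N u) = (u \in N w).
Proof. by rewrite !inN eq_sym cube_sym. Qed.

Lemma card_N u : #|N u| = n.+1.
Proof.
rewrite /N cardsU1 card_imset ?card_ord; last exact: flip_inj.
have -> : u \notin [set flip u i | i : 'I_n].
  by apply/imsetP => -[i _ h]; move: (flip_neq u i); rewrite -h eqxx.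
by [].
Qed.

Lemma m_inj u : {in N u &, injective mm}.
Proof.
have key : forall i, mm (flip u i) != mm u.
  move=> i; rewrite m_flip; apply: contraNneq (m_notin u) => <-.
  by apply/imsetP; exists i.
move=> w1 w2; rewrite /N !inE => /orP [/eqP ->|/imsetP [i _ ->]] /orP [/eqP ->|/imsetP [j _ ->]] //.
- by move=> h; move: (key j); rewrite h eqxx.
- by move=> h; move: (key i); rewrite h eqxx.
- rewrite !m_flip => h; have [->//|hij] := eqVneq i j.
  by move: (out_neq hc u hij); rewrite h eqxx.
Qed.

Lemma one_in_N u col : #|N u :&: [set w | mm w == col]| = 1.
Proof.
have him : mm @: N u = [set: 'I_n.+1].
  apply/eqP; rewrite eqEcard subsetT cardsT card_ord (card_in_imset (@m_inj u)) card_N leqnn /=; by [].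
have : col \in mm @: N u by rewrite him inE.
case/imsetP => w0 hw0 e; apply/eqP/cards1P; exists w0; apply/setP => w.
rewrite in_setI in_set1 [w \in [set _ | _]]inE; apply/andP/eqP => [[hw /eqP hm]|]; last by move=> ->; rewrite hw0 -e eqxx.
by apply: (m_inj hw hw0); rewrite hm.
Qed.

Lemma lowerB : exists m, n = 2 ^ m - 1.
Proof.
pose S := [set w | mm w == ord0].
have E1 : \sum_(u : V) #|N u :&: S| = 2 ^ n.
  rewrite (eq_bigr (fun _ => 1)) => [|u _]; last exact: one_in_N.
  by rewrite sum1_card cardT -cardE card_ffun card_bool card_ord.
have E2 : \sum_(u : V) #|N u :&: S| = #|S| * n.+1.
  rewrite (eq_bigr (fun u => \sum_(w : V) ((w \in N u) && (w \in S) : nat))); last first.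
    by move=> u _; rewrite -sum1_card big_mkcond /=; apply: eq_bigr => w _; rewrite inE; case: (_ && _).
  rewrite exchange_big /= -sum_nat_const; rewrite [RHS]big_mkcond /=; apply: eq_bigr => w _.
  case: (w \in S); last by apply: big1 => u _; rewrite andbF.
  rewrite -(card_N w) -sum1_card [RHS]big_mkcond /=; apply: eq_bigr => u _.
  by rewrite andbT N_sym.
have : n.+1 %| 2 ^ n by rewrite -E1 E2 dvdn_mull.
move/(dvdn_pfactor _ _ (isT : prime 2)) => -[m _ hm]; exists m; rewrite -hm; lia.
Qed.
End LowerB.

Theorem mainTheorem4 (n : nat) (hn : 1 <= n) :
  ((exists m : nat, n = 2 ^ m - 1) ->
     is_incidence_chromatic_number (@hypercube_adj n) n.+1) /\
  (~ (exists m : nat, n = 2 ^ m - 1) ->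
     is_incidence_chromatic_number (@hypercube_adj n) n.+2).
Proof.
split.
- case=> m hm; split.
    apply: (@hamming_colorable n m); have := expn_gt0 2 m; lia.
  by move=> k' [c hc]; exact: lowerA hc hn.
- move=> hnot; split.
    pose p := trunc_log 2 n.+1.
    have h1 : 2 ^ p <= n.+1 by apply: trunc_logP.
    have h2 : n.+1 < 2 ^ p.+1 by apply: trunc_log_ltn.
    have h0 := expn_gt0 2 p.
    rewrite expnS in h2.
    apply: (@gen_colorable n p); lia.
  move=> k' [c hc]; have := lowerA hc hn; rewrite leq_eqVlt => /orP [/eqP e|//].
  subst k'; case: hnot; exact: lowerB hc.
Qed.
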